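(* Let $\mathbb{F}\in\{\mathbb{R},\mathbb{C}\}$ and $m\le n\le 2m$. For the $m\times n\times 2$ tensor $$X=\Big((E_m,O);\begin{pmatrix}O&E_{\lfloor n/2\rfloor}\\ O&O\end{pmatrix}\Big)$$ (the second slice being the $m\times n$ matrix with an identity block $E_{\lfloor n/2\rfloor}$ in its top-right corner and zeros elsewhere), one has $\mathrm{rank}_{\mathbb{F}}(X)=m+\lfloor n/2\rfloor$.
   Context: $E_k$ is the $k\times k$ identity, $(E_m,O)$ is the $m\times n$ matrix obtained by concatenating $E_m$ with a zero $m\times(n-m)$ block. $(A;B)$ denotes the tensor with slices $A,B$. A rank-one tensor has the form $(\alpha\,\mathbf{a}\mathbf{b}^T;\beta\,\mathbf{a}\mathbf{b}^T)$ with nonzero $\mathbf{a},\mathbf{b}$, $(\alpha,\beta)\ne0$; $\mathrm{rank}_{\mathbb{F}}$ is the minimal number of rank-one tensors over $\mathbb{F}$ summing slicewise to the tensor. *)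

(* Defs.v *)
From HB Require Import structures.
From mathcomp Require Import all_boot all_order all_algebra.
Set Implicit Arguments. Unset Strict Implicit. Unset Printing Implicit Defensive.
Import Order.TTheory GRing.Theory Num.Theory.
Local Open Scope ring_scope.

(* An m x n x 2 tensor (A;B) is represented by its two slices A B : 'M[F]_(m,n). *)

Definition rank_one (F : fieldType) (m n : nat) (A B : 'M[F]_(m, n)) : Prop :=
  exists (a : 'cV[F]_m) (b : 'cV[F]_n) (al be : F),
    [/\ a != 0, b != 0, (al, be) != (0, 0),
        A = al *: (a *m b^T) & B = be *: (a *m b^T)].

Definition sum_of_rank_one (F : fieldType) (m n r : nat) (A B : 'M[F]_(m, n)) : Prop :=
  exists (As Bs : 'I_r -> 'M[F]_(m, n)),
    [/\ forall i, rank_one (As i) (Bs i),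
        A = \sum_(i < r) As i & B = \sum_(i < r) Bs i].

Definition tensor_rank_is (F : fieldType) (m n : nat) (A B : 'M[F]_(m, n)) (r : nat) : Prop :=
  sum_of_rank_one r A B /\ forall r', sum_of_rank_one r' A B -> (r <= r')%N.

Definition slice1 (F : fieldType) (m n : nat) : 'M[F]_(m, n) :=
  \matrix_(i < m, j < n) (nat_of_ord i == nat_of_ord j)%:R.

(* Second slice: identity block E_{floor(n/2)} in the top-right corner
   (rows 0..n/2-1, columns n - n/2 .. n-1), zeros elsewhere. *)
Definition slice2 (F : fieldType) (m n : nat) : 'M[F]_(m, n) :=
  \matrix_(i < m, j < n) (nat_of_ord j == (nat_of_ord i + (n - n./2))%N)%:R.

(* Main.v *)
Require Import Defs.
From HB Require Import structures.
From mathcomp Require Import all_boot all_order all_algebra.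
From Stdlib Require Import Lia.
Set Implicit Arguments. Unset Strict Implicit. Unset Printing Implicit Defensive.
Import Order.TTheory GRing.Theory Num.Theory.
Local Open Scope ring_scope.

Lemma core_rank (F : fieldType) (m n r : nat) (U : 'M[F]_(m, r)) (W Z : 'M[F]_(r, n))
  (al be : 'rV[F]_r) :
  (forall t, al 0 t != 0 \/ be 0 t != 0) ->
  U *m diag_mx be *m W = 0 ->
  U *m (diag_mx al *m W - diag_mx be *m Z) = 0 ->
  (\rank W + \rank U <= r)%N.
Proof.
move=> Hne H1 H2.
set Q := U^T. set K := kermx Q.
set X := W^T *m diag_mx be.
set Y := W^T *m diag_mx al - Z^T *m diag_mx be.
set Pz := diag_mx (\row_t ((be 0 t == 0)%:R : F)).
set d := \row_t (if be 0 t == 0 then al 0 t else be 0 t).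
set di := \row_t (d 0 t)^-1.
have HX : (X <= K)%MS.
  apply/sub_kermxP.
  have <- : (U *m diag_mx be *m W)^T = X *m Q by rewrite /X /Q !trmx_mul tr_diag_mx mulmxA.
  by rewrite H1 trmx0.
have HY : (Y <= K)%MS.
  apply/sub_kermxP.
  have <- : (U *m (diag_mx al *m W - diag_mx be *m Z))^T = Y *m Q.
    by rewrite /Y /Q trmx_mul linearB /= !trmx_mul !tr_diag_mx mulmxBl.
  by rewrite H2 trmx0.
have HXP : X *m Pz = 0.
  apply/matrixP => i j; rewrite /X /Pz !mul_mx_diag !mxE.
  by case: (eqVneq (be 0 j) 0) => [->|]; rewrite ?mulr0 ?mul0r ?mulr1.
have HWd : W^T *m diag_mx d = X + Y *m Pz.
  apply/matrixP => i j; rewrite /X /Y /Pz /d mulmxBl !mul_mx_diag !mxE.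
  by case: (eqVneq (be 0 j) 0) => [->|]; rewrite ?mulr0 ?mulr1 ?subr0 ?add0r ?addr0.
have Hdi : diag_mx d *m diag_mx di = 1%:M.
  apply/matrixP => i j; rewrite mul_diag_mx !mxE.
  case: (eqVneq i j) => [_|Hij]; last by rewrite mulr0n mulr0.
  rewrite !mulr1n divff //.
  by case: (eqVneq (be 0 i) 0) => [Hb|//]; case: (Hne i) => //; rewrite Hb eqxx.
have HrW : (\rank W <= \rank X + \rank (Y *m Pz))%N.
  rewrite -mxrank_tr; apply: leq_trans (mxrank_add X (Y *m Pz)); rewrite -HWd.
  have := mxrankM_maxl (W^T *m diag_mx d) (diag_mx di).
  by rewrite -mulmxA Hdi mulmx1.
have HrX : (\rank X <= \rank (K :&: kermx Pz))%N.
  by apply: mxrankS; rewrite sub_capmx HX; apply/sub_kermxP.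
have HrY : (\rank (Y *m Pz) <= \rank (K *m Pz))%N.
  by case/submxP: HY => C ->; rewrite -mulmxA mxrankM_maxr.
have HK := mxrank_mul_ker K Pz.
rewrite mxrank_ker /Q mxrank_tr in HK.
have HU : (\rank U <= r)%N by rewrite -mxrank_tr rank_leq_row.
apply: leq_trans (leq_add (leq_trans HrW (leq_add HrX HrY)) (leqnn _)) _.
rewrite -[X in (_ <= X)%N](subnK HU) -HK addnC.
by rewrite addnC [(\rank (K :&: _) + _)%N]addnC.
Qed.
Lemma sum_delta (F : fieldType) n (p : nat) (l0 : 'I_n) (f : 'I_n -> F) :
  (l0 : nat) = p -> \sum_(l < n) (((l : nat) == p)%:R * f l) = f l0.
Proof.
move=> <-; rewrite (bigD1 l0) //= eqxx mul1r big1 ?addr0 // => l Hl.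
by have /negbTE -> : (l : nat) != l0 by []; rewrite mul0r.
Qed.

Lemma half_facts n : (n./2 + n./2 <= n)%N /\ (n <= n./2 + n./2 + 1)%N.
Proof.
have H := odd_double_half n; rewrite -addnn in H.
case: (odd n) H => /= H; split; apply/ssrnat.leP; rewrite -?plusE in H *; lia.
Qed.

Lemma E1 (F : fieldType) m n : slice2 F m n *m slice2 F n n = 0.
Proof.
apply/matrixP => i j; rewrite !mxE; apply: big1 => l _; rewrite !mxE.
case: eqP => [Hl|_]; last by rewrite mul0r.
case: eqP => [Hj|_]; last by rewrite mulr0.
have := ltn_ord j; have [H1 H2] := half_facts n.
move: H1 H2 => /ssrnat.leP H1 /ssrnat.leP H2 /ssrnat.ltP H3. exfalso. rewrite -?plusE -?minusE in Hl Hj H1 H2 H3. lia.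
Qed.

Lemma E2 (F : fieldType) m n : (m <= n)%N -> slice1 F m n *m slice2 F n n = slice2 F m n.
Proof.
move=> mn; apply/matrixP => i j; rewrite !mxE.
pose f := fun l : 'I_n => ((j : nat) == (l + (n - n./2))%N)%:R : F.
transitivity (\sum_(l < n) (((l : nat) == i)%:R * f l)).
  by apply: eq_bigr => l _; rewrite !mxE eq_sym.
by rewrite (@sum_delta F n i (widen_ord mn i) f) // /f mxE.
Qed.

Lemma E3 (F : fieldType) m n : (m <= n)%N -> slice1 F m n *m (slice1 F m n)^T = 1%:M.
Proof.
move=> mn; apply/matrixP => i j; rewrite !mxE.
pose f := fun l : 'I_n => ((j : nat) == l)%:R : F.
transitivity (\sum_(l < n) (((l : nat) == i)%:R * f l)).
  by apply: eq_bigr => l _; rewrite !mxE eq_sym.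
rewrite (@sum_delta F n i (widen_ord mn i) f) // /f. by rewrite eq_sym.
Qed.

Lemma rank_slice1 (F : fieldType) m n : (m <= n)%N -> (m <= \rank (slice1 F m n))%N.
Proof.
move=> mn; have := mxrankM_maxl (slice1 F m n) (slice1 F m n)^T.
by rewrite E3 // mxrank1.
Qed.

Lemma rank_slice2 (F : fieldType) m n : (n./2 <= m)%N -> (n./2 <= \rank (slice2 F m n))%N.
Proof.
move=> km; set k := n./2; set c := (n - n./2)%N.
pose P : 'M[F]_(k, m) := \matrix_(a < k, i < m) ((i : nat) == a)%:R.
pose Q : 'M[F]_(n, k) := \matrix_(j < n, b < k) ((j : nat) == (b + c)%N)%:R.
have HPQ : P *m slice2 F m n *m Q = 1%:M.
  apply/matrixP => a b; rewrite !mxE.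
  have Hac : (a + c < n)%N.
    have := ltn_ord a; have [H1 H2] := half_facts n.
    move: H1 H2 => /ssrnat.leP H1 /ssrnat.leP H2 /ssrnat.ltP H3; apply/ssrnat.ltP.
    rewrite /c /k -?plusE -?minusE in H1 H2 H3 *; lia.
  pose f := fun j : 'I_n => ((j : nat) == (b + c)%N)%:R : F.
  transitivity (\sum_(j < n) (((j : nat) == (a + c)%N)%:R * f j)).
    apply: eq_bigr => j _; rewrite !mxE /f; congr (_ * _).
    pose g := fun i : 'I_m => ((j : nat) == (i + (n - n./2))%N)%:R : F.
    transitivity (\sum_(i < m) (((i : nat) == a)%:R * g i)).
      by apply: eq_bigr => i _; rewrite !mxE.
    by rewrite (@sum_delta F m a (widen_ord km a) g) // /g.
  rewrite (@sum_delta F n (a + c) (Ordinal Hac) f) // /f /=.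
  by rewrite eqn_add2r.
have := mxrankM_maxl (P *m slice2 F m n) Q; rewrite HPQ mxrank1 => H.
apply: leq_trans H _; exact: mxrankM_maxr.
Qed.

Lemma lower (F : fieldType) m n r : (m <= n)%N -> (n./2 <= m)%N ->
  sum_of_rank_one r (slice1 F m n) (slice2 F m n) -> (m + n./2 <= r)%N.
Proof.
move=> mn km [As [Bs [Hr HA HB]]].
have : forall i, exists x : 'cV[F]_m * 'cV[F]_n * (F * F),
    [/\ (x.2.1, x.2.2) != (0, 0), As i = x.2.1 *: (x.1.1 *m x.1.2^T)
      & Bs i = x.2.2 *: (x.1.1 *m x.1.2^T)].
  move=> i; case: (Hr i) => a [b [al [be [_ _ H0 HA' HB']]]].
  by exists (a, b, (al, be)).
case/fin_all_exists => x Hx.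
pose U : 'M[F]_(m, r) := \matrix_(p, t) (x t).1.1 p 0.
pose V : 'M[F]_(n, r) := \matrix_(q, t) (x t).1.2 q 0.
pose al := \row_t (x t).2.1. pose be := \row_t (x t).2.2.
have Hsum : forall g : 'I_r -> F,
    \sum_t g t *: ((x t).1.1 *m ((x t).1.2)^T) = U *m diag_mx (\row_t g t) *m V^T.
  move=> g; apply/matrixP => p q; rewrite summxE mul_mx_diag !mxE.
  apply: eq_bigr => t _; rewrite !mxE big_ord1 !mxE.
  by rewrite mulrCA mulrA.
have HAe : slice1 F m n = U *m diag_mx al *m V^T.
  by rewrite HA -Hsum; apply: eq_bigr => t _; case: (Hx t).
have HBe : slice2 F m n = U *m diag_mx be *m V^T.
  by rewrite HB -Hsum; apply: eq_bigr => t _; case: (Hx t).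
set s := slice2 F n n.
have Hcore := @core_rank F m n r U (V^T *m s) V^T al be.
have H1 : U *m diag_mx be *m (V^T *m s) = 0 by rewrite mulmxA -HBe E1.
have Hs : U *m diag_mx al *m (V^T *m s) = slice2 F m n by rewrite mulmxA -HAe E2.
have H2 : U *m (diag_mx al *m (V^T *m s) - diag_mx be *m V^T) = 0.
  by rewrite mulmxBr !mulmxA -mulmxA Hs -HBe subrr.
have Hne : forall t, al 0 t != 0 \/ be 0 t != 0.
  move=> t; rewrite !mxE; case: (Hx t) => H _ _; move: H.
  case: (eqVneq (x t).2.1 0) => [->|]; last by left.
  by rewrite xpair_eqE eqxx /= => ?; right.
have := Hcore Hne H1 H2.
have R1 : (\rank (slice1 F m n) <= \rank U)%N.
  by rewrite HAe -mulmxA; apply: mxrankM_maxl.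
have R2 : (\rank (slice2 F m n) <= \rank (V^T *m s))%N.
  by rewrite -Hs; apply: mxrankM_maxr.
have R3 := rank_slice1 F mn. have R4 := rank_slice2 F km.
move=> H; apply: leq_trans H; rewrite addnC.
apply: leq_add; [exact: leq_trans R4 R2 | exact: leq_trans R3 R1].
Qed.

Lemma delta_rank_one (F : fieldType) m n (i : 'I_m) (j : 'I_n) (al be : F) :
  (al, be) != (0, 0) ->
  rank_one (al *: (delta_mx i j : 'M[F]_(m, n))) (be *: delta_mx i j).
Proof.
move=> Hab; exists (delta_mx i 0), (delta_mx j 0), al, be.
have nz : forall p (k : 'I_p), (delta_mx k 0 : 'cV[F]_p) != 0.
  move=> p k; apply/negP => /eqP H; have := congr1 (fun M : 'cV[F]_p => M k ord0) H.
  by rewrite !mxE !eqxx /= => /eqP; rewrite oner_eq0.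
by rewrite trmx_delta mul_delta_mx; split.
Qed.

Lemma upper (F : fieldType) m n : (m <= n)%N -> (n./2 <= m)%N ->
  sum_of_rank_one (m + n./2) (slice1 F m n) (slice2 F m n).
Proof.
move=> mn km; set k := n./2; set c := (n - n./2)%N.
have Hbc : forall b : 'I_k, (b + c < n)%N.
  move=> b; have := ltn_ord b; have [H1 H2] := half_facts n.
  move: H1 H2 => /ssrnat.leP H1 /ssrnat.leP H2 /ssrnat.ltP H3; apply/ssrnat.ltP.
  rewrite /c /k -?plusE -?minusE in H1 H2 H3 *; lia.
pose colB (b : 'I_k) : 'I_n := Ordinal (Hbc b).
pose As (i : 'I_(m + k)) : 'M[F]_(m, n) :=
  match split i with inl a => 1 *: delta_mx a (widen_ord mn a) | inr b => 0 *: delta_mx (widen_ord km b) (colB b) end.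
pose Bs (i : 'I_(m + k)) : 'M[F]_(m, n) :=
  match split i with inl a => 0 *: delta_mx a (widen_ord mn a) | inr b => 1 *: delta_mx (widen_ord km b) (colB b) end.
have SL : forall i : 'I_m, split (lshift k i) = inl i := fun i => unsplitK (inl i).
have SR : forall i : 'I_k, split (rshift m i) = inr i := fun i => unsplitK (inr i).
exists As, Bs; split.
- move=> i; rewrite /As /Bs; case: (split i) => a; apply: delta_rank_one;
    by rewrite xpair_eqE oner_eq0 ?andbF ?andFb.
- rewrite big_split_ord /=.
  under eq_bigr => i _ do rewrite /As SL scale1r.
  under [X in _ + X]eq_bigr => i _ do rewrite /As SR scale0r.
  rewrite big1_eq addr0; apply/matrixP => p q; rewrite summxE !mxE.
  pose f := fun i : 'I_m => ((q : nat) == i)%:R : F.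
  transitivity (\sum_(i < m) (((i : nat) == p)%:R * f i)); last first.
    apply: eq_bigr => i _; rewrite !mxE /f /=.
    case: (eqVneq i p) => [->|H]; first by rewrite eqxx mul1r.
    have /negbTE -> : (i : nat) != p by [].
    by rewrite mul0r.
  by rewrite (@sum_delta F m p p f) // /f eq_sym.
- rewrite big_split_ord /=.
  under eq_bigr => i _ do rewrite /Bs SL scale0r.
  under [X in _ + X]eq_bigr => i _ do rewrite /Bs SR scale1r.
  rewrite big1_eq add0r; apply/matrixP => p q; rewrite summxE !mxE.
  pose f := fun i : 'I_k => ((q : nat) == (i + c)%N)%:R : F.
  transitivity (\sum_(i < k) (((i : nat) == p)%:R * f i)); last first.
    apply: eq_bigr => i _; rewrite !mxE /f /=.
    rewrite -[p == _]val_eqE -[q == colB i]val_eqE /=.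
    case: (eqVneq (i : nat) p) => [Hip|Hip].
      by rewrite /= mulr1n mul1r.
    by rewrite /= mulr0n mul0r.
  case: (ltnP p k) => Hp.
    by rewrite (@sum_delta F k p (Ordinal Hp) f).
  rewrite big1; last by move=> i _; rewrite (ltn_eqF (leq_trans (ltn_ord i) Hp)) mul0r.
  case: eqP => // Hq; exfalso; have := ltn_ord q; rewrite Hq.
  have [H1 H2] := half_facts n.
  move: H1 H2 Hp => /ssrnat.leP H1 /ssrnat.leP H2 /ssrnat.leP H3 /ssrnat.ltP H4.
  rewrite /c /k -?plusE -?minusE in H1 H2 H3 H4; lia.
Qed.

Lemma main_gen (F : fieldType) m n : (m <= n)%N -> (n <= 2 * m)%N ->
  tensor_rank_is (slice1 F m n) (slice2 F m n) (m + n./2)%N.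
Proof.
move=> mn n2m.
have km : (n./2 <= m)%N.
  have [H1 _] := half_facts n.
  move: H1 n2m => /ssrnat.leP H1 /ssrnat.leP H2; apply/ssrnat.leP.
  rewrite -?plusE -?multE in H1 H2; lia.
split; first exact: upper.
by move=> r'; apply: lower.
Qed.

Theorem mainTheorem8 :
  (forall (R : rcfType) (m n : nat), (m <= n)%N -> (n <= 2 * m)%N ->
     tensor_rank_is (slice1 R m n) (slice2 R m n) (m + n./2)%N)
  /\
  (forall (C : numClosedFieldType) (m n : nat), (m <= n)%N -> (n <= 2 * m)%N ->
     tensor_rank_is (slice1 C m n) (slice2 C m n) (m + n./2)%N).
Proof.
by split=> F m n; apply: main_gen.
Qed.
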